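(* Let $k\geq 4$ and let $G$ be a diregular $(2,k,+3)$-digraph. Let $u,v$ be distinct vertices with exactly one common out-neighbour $u_2$, and write $N^+(u)=\{u_1,u_2\}$, $N^+(v)=\{v_1,u_2\}$. Then $N^+(u_1)\cap N^+(v_1)\neq\varnothing$.
   Context: A digraph is $k$-geodetic if for every ordered pair of vertices $x,y$ there is at most one directed path from $x$ to $y$ of length at most $k$ (the trivial path counts). A diregular $(2,k,+3)$-digraph is a $k$-geodetic digraph of order $1+2+\dots+2^k+3$ in which every vertex has in- and out-degree $2$. $N^+(x)$ is the set of out-neighbours of $x$. *)

(* Defs.v *)
From mathcomp Require Import all_boot.
Set Implicit Arguments. Unset Strict Implicit. Unset Printing Implicit Defensive.

Definition outN (V : finType) (e : rel V) (x : V) : {set V} := [set y | e x y].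
Definition inN (V : finType) (e : rel V) (x : V) : {set V} := [set y | e y x].

(* A directed path (walk) from x to y of length size p is a sequence p of
   vertices following x, with consecutive arcs, ending at y.  The trivial
   path is p = [::] (when x = y). *)
Definition dpath (V : finType) (e : rel V) (x y : V) (p : seq V) : bool :=
  path e x p && (last x p == y).

Definition k_geodetic (V : finType) (e : rel V) (k : nat) : Prop :=
  forall (x y : V) (p q : seq V),
    size p <= k -> size q <= k -> dpath e x y p -> dpath e x y q -> p = q.

Definition diregular (V : finType) (e : rel V) (d : nat) : Prop :=
  forall x : V, #|outN e x| = d /\ #|inN e x| = d.

Definition two_k_plus3_digraph (V : finType) (e : rel V) (k : nat) : Prop :=
  [/\ k_geodetic e k, diregular e 2 & #|V| = \sum_(0 <= i < k.+1) 2 ^ i + 3].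

(* Main.v *)
Require Import Defs.
From mathcomp Require Import all_boot zify.
Set Implicit Arguments. Unset Strict Implicit. Unset Printing Implicit Defensive.

Section G.
Variables (V : finType) (e : rel V) (k : nat).
Hypothesis geo : k_geodetic e k.
Hypothesis reg : diregular e 2.

Fixpoint E (j : nat) (x : V) : {set V} :=
  match j with 0 => [set x] | j'.+1 => \bigcup_(z in outN e x) E j' z end.

Fixpoint R (j : nat) (x : V) : {set V} :=
  match j with 0 => E 0 x | j'.+1 => R j' x :|: E j'.+1 x end.

Lemma E0 x y : (y \in E 0 x) = (y == x).
Proof. by rewrite /= inE. Qed.

Lemma ES j x y : reflect (exists2 z, e x z & y \in E j z) (y \in E j.+1 x).
Proof.
apply: (iffP bigcupP) => [[z]|[z]]; rewrite ?inE => *; by exists z; rewrite ?inE.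
Qed.

Lemma E1 x y : (y \in E 1 x) = e x y.
Proof.
apply/ES/idP => [[z xz]|xy]; first by rewrite E0 => /eqP->.
by exists y; rewrite ?E0.
Qed.

Lemma E_walk j x y : y \in E j x <-> exists p, size p = j /\ dpath e x y p.
Proof.
elim: j x => [|j IH] x.
  rewrite E0; split => [/eqP->|[[|z p] [//= _ /andP[_ /eqP h]]]].
    by exists [::]; rewrite /dpath /=.
  by rewrite -h.
split.
  move/ES => [z xz /IH [p [sp /andP [pp lp]]]].
  by exists (z :: p); rewrite /dpath /= xz pp lp sp.
move=> [[|z p] [//= [sp] /andP[/= /andP[xz pp] lp]]].
apply/ES; exists z => //; apply/IH; exists p; split=> //.
by rewrite /dpath pp lp.
Qed.

Lemma geoE i j x y : y \in E i x -> y \in E j x -> i <= k -> j <= k -> i = j.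
Proof.
move=> /E_walk [p [sp dp]] /E_walk [q [sq dq]] ik jk.
rewrite -sp -sq; congr size; apply: (geo (x:=x) (y:=y)); by rewrite ?sp ?sq.
Qed.

Lemma first_step x z z' i j y : e x z -> e x z' -> y \in E i z -> y \in E j z' ->
  i < k -> j < k -> z = z'.
Proof.
move=> xz xz' yi yj ik jk.
have h1 : y \in E i.+1 x by apply/ES; exists z.
have h2 : y \in E j.+1 x by apply/ES; exists z'.
move: h1 h2 => /E_walk [p [sp dp]] /E_walk [q [sq dq]].
move: yi yj => /E_walk [p' [sp' dp']] /E_walk [q' [sq' dq']].
have ep : z :: p' = p.
  apply: (geo (x:=x) (y:=y)); rewrite ?sp //=; first by rewrite sp'.
  by move: dp' => /andP[a b]; rewrite /dpath /= xz a b.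
have eq : z' :: q' = q.
  apply: (geo (x:=x) (y:=y)); rewrite ?sq //=; first by rewrite sq'.
  by move: dq' => /andP[a b]; rewrite /dpath /= xz' a b.
have : p = q by apply: (geo (x:=x) (y:=y)); rewrite ?sp ?sq.
by rewrite -ep -eq => -[].
Qed.

Lemma E_add i j x y : reflect (exists2 z, z \in E i x & y \in E j z) (y \in E (i + j) x).
Proof.
elim: i x => [|i IH] x /=.
  apply: (iffP idP) => [h|[z]]; first by exists x; rewrite ?inE.
  by rewrite inE => /eqP->.
apply: (iffP (ES _ _ _)) => [[z xz /IH [w wz yw]]|[w /ES [z xz wz] yw]].
  by exists w => //; apply/ES; exists z.
by exists z => //; apply/IH; exists w.
Qed.

Lemma outNE x y : (y \in outN e x) = e x y.
Proof. by rewrite inE. Qed.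

Lemma outN2 x : exists a b, a != b /\ outN e x = [set a; b].
Proof. by apply/cards2P; rewrite (proj1 (reg x)). Qed.

Lemma cardE_ j x : j <= k -> #|E j x| = 2 ^ j.
Proof.
elim: j x => [|j IH] x jk; first by rewrite /= cards1.
have [a [b [ab hx]]] := outN2 x.
have -> : E j.+1 x = E j a :|: E j b.
  apply/setP => y; rewrite inE; apply/ES/orP => [[z]|[ya|yb]].
    by rewrite -outNE hx !inE => /orP[] /eqP-> h; [left|right].
  by exists a => //; rewrite -outNE hx !inE eqxx.
  by exists b => //; rewrite -outNE hx !inE eqxx orbT.
have dis : E j a :&: E j b = set0.
  apply/setP => y; rewrite !inE; apply/negP => /andP[ya yb].
  have xa : e x a by rewrite -outNE hx !inE eqxx.
  have xb : e x b by rewrite -outNE hx !inE eqxx orbT.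
  by move/eqP: ab; apply; apply: (first_step xa xb ya yb).
have := cardsUI (E j a) (E j b); rewrite dis cards0 !IH ?(ltnW jk) // expnS.
lia.
Qed.

Lemma R_mem j x y : reflect (exists2 i, i <= j & y \in E i x) (y \in R j x).
Proof.
elim: j => [|j IH] /=.
  by apply: (iffP idP) => [h|[i]]; [exists 0 | rewrite leqn0 => /eqP->].
rewrite inE; apply: (iffP orP) => [[/IH [i ij yi]|yj]|[i]].
- by exists i => //; apply: leqW.
- by exists j.+1.
rewrite leq_eqVlt => /orP[/eqP->|ij yi]; first by right.
by left; apply/IH; exists i.
Qed.

Lemma cardR j x : j <= k -> #|R j x| + 1 = 2 ^ j.+1.
Proof.
elim: j => [|j IH] jk; first by rewrite /= cards1.
change (#|R j x :|: E j.+1 x| + 1 = 2 ^ j.+2).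
have dis : R j x :&: E j.+1 x = set0.
  apply/setP => y; rewrite !inE; apply/negP => /andP[/R_mem [i ij yi] yj].
  have := geoE yi yj; lia.
have := cardsUI (R j x) (E j.+1 x); rewrite dis cards0 cardE_ // .
have := IH (ltnW jk); rewrite !expnS; lia.
Qed.


Hypothesis hk : 4 <= k.
Hypothesis hV : #|V| = \sum_(0 <= i < k.+1) 2 ^ i + 3.

Definition Qs (y1 x2 : V) := ~: (R k.-1 y1 :|: R k.-1 x2).

Lemma sum_pow n : \sum_(0 <= i < n) 2 ^ i + 1 = 2 ^ n.
Proof.
elim: n => [|n IH]; first by rewrite big_nil.
by rewrite big_nat_recr //= -addnA addnC -addnA [1 + _]addnC IH expnS; lia.
Qed.

Lemma cardV : #|V| + 1 = 2 ^ k.+1 + 3.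
Proof. by rewrite hV -sum_pow; lia. Qed.

Lemma disj w w1 w2 y : e w w1 -> e w w2 -> w1 != w2 ->
  y \in R k.-1 w1 -> y \in R k.-1 w2 -> False.
Proof.
move=> h1 h2 n12 /R_mem [i ii yi] /R_mem [j jj yj].
by move/eqP: n12; apply; apply: (first_step h1 h2 yi yj); lia.
Qed.

Lemma cardQ w w1 w2 : e w w1 -> e w w2 -> w1 != w2 -> #|Qs w1 w2| = 4.
Proof.
move=> h1 h2 n12.
have dis : R k.-1 w1 :&: R k.-1 w2 = set0.
  apply/setP => y; rewrite !inE; apply/negP => /andP[y1 y2].
  exact: (disj h1 h2 n12 y1 y2).
have := cardsUI (R k.-1 w1) (R k.-1 w2); rewrite dis cards0.
have := cardsC (R k.-1 w1 :|: R k.-1 w2); rewrite /Qs.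
have := cardR w1 (leq_pred k); have := cardR w2 (leq_pred k).
have := cardV; have -> : k.-1.+1 = k by lia.
rewrite expnS; lia.
Qed.

Lemma cardO x : #|~: R k x| = 3.
Proof.
have := cardsC (R k x); have := cardR x (leqnn k); have := cardV; lia.
Qed.

Lemma notR_self w w1 : e w w1 -> w \in R k.-1 w1 -> False.
Proof.
move=> h /R_mem [i ii wi].
have h1 : w \in E (1 + i) w by apply/E_add; exists w1; rewrite // E1.
have h0 : w \in E 0 w by rewrite E0.
have := geoE h1 h0; lia.
Qed.

Lemma depth2 u u1 u2 v i : e u u1 -> e u u2 -> u1 != u2 -> e v u2 ->
  v \in E i u1 -> i + 2 <= k -> False.
Proof.
move=> h1 h2 n12 h3 vi ik.
have a : u2 \in E (1 + i + 1) u.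
  apply/E_add; exists v; last by rewrite E1.
  by apply/E_add; exists u1; rewrite // E1.
have b : u2 \in E 1 u by rewrite E1.
have := geoE a b; lia.
Qed.

Lemma claim1 u u1 u2 v1 x i j :
  e u u1 -> e u u2 -> u1 != u2 ->
  x \in E i u1 -> x \in E j v1 -> i < j -> j <= k.-1 -> E (k - j) x \subset Qs v1 u2.
Proof.
move=> h1 h2 n12 xi xj ij jk; apply/subsetP => y yE.
rewrite /Qs !inE negb_or; apply/andP; split.
  apply/negP => /R_mem [l lk yl].
  have : y \in E (j + (k - j)) v1 by apply/E_add; exists x.
  move/geoE => /(_ _ yl); lia.
apply/negP => y2.
have : y \in E (i + (k - j)) u1 by apply/E_add; exists x.
move=> yu; apply: (disj h1 h2 n12 _ y2); apply/R_mem; exists (i + (k - j)) => //; lia.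
Qed.


Lemma uniq_card (s : seq V) (A : {set V}) : uniq s -> {subset s <= A} -> size s <= #|A|.
Proof. move=> us sA; rewrite cardE; apply: uniq_leq_size => // x /sA; by rewrite mem_enum. Qed.

Lemma bad u u1 u2 v v1 p z : e u u1 -> e u u2 -> u1 != u2 -> e v v1 -> e v u2 -> v1 != u2 ->
  p \in Qs v1 u2 -> p \in R k.-1 u1 -> e p z -> z \in R k.-1 u1 ->
  z \notin Qs v1 u2 -> z != v1 -> z \in ~: R k u2.
Proof.
move=> h1 h2 n12 g1 g2 m12 pQ pR pz zR zQ zv1.
move: zQ; rewrite /Qs !inE negbK => /orP[zv|zu2]; last by case: (disj h1 h2 n12 zR zu2).
move: (zv) => /R_mem [j jk zj].
case: j jk zj => [|j] jk zj; first by move: zj zv1; rewrite E0 => ->.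
move: zj; rewrite -addn1 => /E_add [q qj qz]; rewrite E1 in qz.
have qR : q \in R k.-1 v1 by apply/R_mem; exists j => //; exact: ltnW.
have pq : p != q by apply/eqP => epq; move: pQ; rewrite /Qs !inE epq qR.
apply/negP => /R_mem [l lk zl].
have [lk1|lk1] := leqP l k.-1.
  by apply: (disj h1 h2 n12 zR); apply/R_mem; exists l.
have el : l = k.-1 + 1 by clear -lk lk1 hk; lia.
move: zl; rewrite el => /E_add [y yl yz]; rewrite E1 in yz.
have yR : y \in R k.-1 u2 by apply/R_mem; exists k.-1.
have [yp|yp] := eqVneq y p; first by subst y; case: (disj h1 h2 n12 pR yR).
have [yq|yq] := eqVneq y q; first by subst y; case: (disj g1 g2 m12 qR yR).
suff : 3 <= 2 by [].
rewrite -{2}(proj2 (reg z)); apply: (uniq_card (s := [:: p; q; y])).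
  by rewrite /= !inE negb_or pq eq_sym yp eq_sym yq.
by move=> w; rewrite !inE => /or3P[]/eqP->.
Qed.

End G.
Theorem lemma7 (V : finType) (e : rel V) (k : nat) :
  4 <= k -> two_k_plus3_digraph e k ->
  forall u v u1 u2 v1 : V,
    u != v ->
    outN e u :&: outN e v = [set u2] ->
    outN e u = [set u1; u2] ->
    outN e v = [set v1; u2] ->
    outN e u1 :&: outN e v1 != set0.
Proof.
move=> hk [geo reg hV] u v u1 u2 v1 uv Huv Hu Hv.
have eu1 : e u u1 by rewrite -outNE Hu !inE eqxx.
have eu2 : e u u2 by rewrite -outNE Hu !inE eqxx orbT.
have ev1 : e v v1 by rewrite -outNE Hv !inE eqxx.
have ev2 : e v u2 by rewrite -outNE Hv !inE eqxx orbT.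
have n12 : u1 != u2 by have := proj1 (reg u); rewrite Hu cards2; by case: (u1 != u2).
have m12 : v1 != u2 by have := proj1 (reg v); rewrite Hv cards2; by case: (v1 != u2).
have nuv : u1 != v1.
  apply/eqP => h; move/eqP: n12; apply.
  have : u1 \in outN e u :&: outN e v by rewrite inE !outNE eu1 h ev1.
  by rewrite Huv inE => /eqP.
apply/negP => /eqP H0.
have noc : forall y, e u1 y -> e v1 y -> False.
  move=> y h1 h2; have : y \in outN e u1 :&: outN e v1 by rewrite inE !outNE h1 h2.
  by rewrite H0 inE.

have Dep := depth2 geo hk hV.
have Cl := claim1 geo hk hV.
have Bd := bad geo reg hk hV.
have Dj := disj geo hk hV.
have NS := notR_self geo hk hV.
have cQ : #|Qs e k v1 u2| = 4 := cardQ geo reg hk hV ev1 ev2 m12.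
have cP : #|Qs e k u1 u2| = 4 := cardQ geo reg hk hV eu1 eu2 n12.
have cO : #|~: R e k u2| = 3 := cardO geo reg hk hV u2.
have cE := cardE_ geo reg.
have GE := geoE geo.
have pw : forall m s, m <= s -> 2 ^ m <= 2 ^ s by move=> m s; rewrite leq_exp2l.
have Rin : forall i x y, i <= k.-1 -> y \in E e i x -> y \in R e k.-1 x.
  by move=> i x y ik yi; apply/R_mem; exists i.
have vQ : v \in Qs e k v1 u2.
  rewrite /Qs !inE negb_or; apply/andP; split; apply/negP => h.
    exact: NS _ _ ev1 h.
  exact: NS _ _ ev2 h.
have uP : u \in Qs e k u1 u2.
  rewrite /Qs !inE negb_or; apply/andP; split; apply/negP => h.
    exact: NS _ _ eu1 h.
  exact: NS _ _ eu2 h.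
have notQ_R : forall y, y \in R e k.-1 u1 -> y \notin Qs e k v1 u2 -> y \in R e k.-1 v1.
  move=> y yR; rewrite /Qs !inE negbK => /orP[//|h].
  by case: (Dj _ _ _ _ eu1 eu2 n12 yR h).
have u1E0 : u1 \in E e 0 u1 by rewrite E0.
have v1E0 : v1 \in E e 0 v1 by rewrite E0.
have NV : forall i, v1 \in E e i u1 -> 0 < i -> i <= 2 -> False.
  move=> i hi i0 i2.
  have ik : i <= k.-1 by clear -i2 hk; lia.
  have sub := Cl v v1 u2 u1 v1 0 i ev1 ev2 m12 v1E0 hi i0 ik.
  have [i1|i2'] : i = 1 \/ i = 2 by clear -i0 i2; lia.
    subst i; have := subset_leq_card sub; rewrite cP cE ?leq_subr //.
    have := pw 3 (k - 1); have -> : 3 <= k - 1 by clear -hk; lia.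
    move=> /(_ isT); rewrite -[2 ^ 3]/8; clear; lia.
  subst i.
  have sub' : E e (k - 2) v1 \subset Qs e k u1 u2 :\ u.
    apply/subsetP => y yE; rewrite in_setD1 (subsetP sub _ yE) andbT.
    apply/eqP => yu; subst y.
    by apply: (Dep v v1 u2 u (k - 2) ev1 ev2 m12 eu2 yE); clear -hk; lia.
  have := subset_leq_card sub'; have := cardsD1 u (Qs e k u1 u2); rewrite uP cP.
  rewrite cE ?leq_subr //.
  have := pw 2 (k - 2); have -> : 2 <= k - 2 by clear -hk; lia.
  move=> /(_ isT); rewrite -[2 ^ 2]/4; clear; lia.

have [a [b [ab Ha]]] := outN2 reg u1.
have ea : e u1 a by rewrite -outNE Ha !inE eqxx.
have eb : e u1 b by rewrite -outNE Ha !inE eqxx orbT.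
have dd : forall i j x y, x \in E e i u1 -> y \in E e j u1 -> i <= k -> j <= k -> i != j -> x != y.
  move=> i j x y xi yj ik jk /eqP ij; apply/eqP => xy; subst y.
  by apply: ij; apply: (GE _ _ _ _ xi yj).
have vn : forall i y, y \in E e i u1 -> i + 2 <= k -> y != v.
  move=> i y yi ik; apply/eqP => yv; subst y.
  exact: (Dep u u1 u2 v i eu1 eu2 n12 ev2 yi ik).
have L : u1 \in Qs e k v1 u2 -> forall x, e u1 x -> x \notin Qs e k v1 u2 ->
    E e 1 x \subset Qs e k v1 u2.
  move=> u1Q x ex xQ.
  have xE : x \in E e 1 u1 by rewrite E1.
  have xR : x \in R e k.-1 u1 by apply: (Rin 1) => //; clear -hk; lia.
  move: (notQ_R x xR xQ) => /R_mem [j jk xj].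
  case: j jk xj => [|[|j]] jk xj.
  - by rewrite E0 in xj; move/eqP: xj => xv; subst x; case: (NV 1 xE).
  - by rewrite E1 in xj; case: (noc x ex xj).
  have sub := Cl u u1 u2 v1 x 1 j.+2 eu1 eu2 n12 xE xj isT jk.
  have [s1|s2] : k - j.+2 = 1 \/ 2 <= k - j.+2 by clear -jk hk; lia.
    by rewrite s1 in sub.
  exfalso.
  have sub' : E e (k - j.+2) x \subset Qs e k v1 u2 :\ u1.
    apply/subsetP => y yE; rewrite in_setD1 (subsetP sub _ yE) andbT.
    apply/eqP => yu; subst y.
    have h1 : u1 \in E e (1 + (k - j.+2)) u1 by apply/E_add; exists x.
    have := GE _ _ _ _ h1 u1E0; clear -jk hk; lia.
  have := subset_leq_card sub'; have := cardsD1 u1 (Qs e k v1 u2); rewrite u1Q cQ.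
  rewrite cE ?leq_subr //.
  have := pw 2 _ s2; rewrite -[2 ^ 2]/4; clear; lia.

have [aQ bQ] : a \in Qs e k v1 u2 /\ b \in Qs e k v1 u2.
  case: (boolP (u1 \in Qs e k v1 u2)) => u1Q.
    suff K : forall x y, e u1 x -> e u1 y -> x != y -> x \in Qs e k v1 u2.
      by split; [apply: (K a b) | apply: (K b a)]; rewrite // eq_sym.
    move=> x y ex ey xy; apply/negPn/negP => xQ.
    have sx := L u1Q x ex xQ.
    have [x1 [x2 [x12 Hx]]] := outN2 reg x.
    have ex1 : e x x1 by rewrite -outNE Hx !inE eqxx.
    have ex2 : e x x2 by rewrite -outNE Hx !inE eqxx orbT.
    have x1E : x1 \in E e 2 u1 by apply/(E_add e 1 1); exists x; rewrite E1.
    have x2E : x2 \in E e 2 u1 by apply/(E_add e 1 1); exists x; rewrite E1.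
    have x1Q : x1 \in Qs e k v1 u2 by apply: (subsetP sx); rewrite E1.
    have x2Q : x2 \in Qs e k v1 u2 by apply: (subsetP sx); rewrite E1.
    have [w wQ [i [wi i1 w1 w2]]] : exists2 w, w \in Qs e k v1 u2 &
        exists i, [/\ w \in E e i u1, 1 <= i <= 2, w != x1 & w != x2].
      case: (boolP (y \in Qs e k v1 u2)) => yQ.
        exists y => //; exists 1; split; rewrite ?E1 //.
          by apply: (dd 1 2); rewrite ?E1 //; clear -hk; lia.
        by apply: (dd 1 2); rewrite ?E1 //; clear -hk; lia.
      have sy := L u1Q y ey yQ.
      have [y1 [y2 [y12 Hy]]] := outN2 reg y.
      have ey1 : e y y1 by rewrite -outNE Hy !inE eqxx.
      exists y1; first by apply: (subsetP sy); rewrite E1.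
      exists 2; split => //.
      + by apply/(E_add e 1 1); exists y; rewrite E1.
      + apply/eqP => yx; subst y1; move/eqP: xy; apply.
        apply: (first_step geo ex ey (y:=x1) (i:=1) (j:=1)); rewrite ?E1 //; clear -hk; lia.
      + apply/eqP => yx; subst y1; move/eqP: xy; apply.
        apply: (first_step geo ex ey (y:=x2) (i:=1) (j:=1)); rewrite ?E1 //; clear -hk; lia.
    have i2 : i <= 2 by case/andP: i1.
    have i0 : 0 < i by case/andP: i1.
    have : 5 <= 4.
      rewrite -{2}cQ; apply: (uniq_card (s := [:: u1; v; x1; x2; w])).
        have h1 : u1 != v by apply: (vn 0); rewrite ?E0 //; clear -hk; lia.
        have h2 : u1 != x1 by apply: (dd 0 2); rewrite ?E0 //; clear -hk; lia.
        have h3 : u1 != x2 by apply: (dd 0 2); rewrite ?E0 //; clear -hk; lia.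
        have h4 : u1 != w by apply: (dd 0 i); rewrite ?E0 //; clear -hk i2 i0; lia.
        have h5 : x1 != v by apply: (vn 2); rewrite //; clear -hk; lia.
        have h6 : x2 != v by apply: (vn 2); rewrite //; clear -hk; lia.
        have h7 : w != v by apply: (vn i); rewrite //; clear -hk i2; lia.
        rewrite /= !inE !negb_or h1 h2 h3 h4 x12 !(eq_sym v) h5 h6 h7 !(eq_sym _ w) w1 w2.
        done.
      by apply/allP; rewrite /= u1Q vQ x1Q x2Q wQ.
    by [].
  have u1R : u1 \in R e k.-1 v1 by apply: notQ_R => //; apply: (Rin 0) => //.
  move: u1R => /R_mem [j jk uj].
  case: j jk uj => [|j] jk uj; first by rewrite E0 (negbTE nuv) in uj.
  have sub := Cl u u1 u2 v1 u1 0 j.+1 eu1 eu2 n12 u1E0 uj isT jk.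
  have [s1|s2] : k - j.+1 = 1 \/ 2 <= k - j.+1 by clear -jk hk; lia.
    rewrite s1 in sub.
    by split; apply: (subsetP sub); rewrite E1.
  exfalso.
  case: j jk uj sub s2 => [|j] jk uj sub s2.
    have := subset_leq_card sub; rewrite cQ cE ?leq_subr //.
    have := pw 3 (k - 1); have -> : 3 <= k - 1 by clear -hk; lia.
    move=> /(_ isT); rewrite -[2 ^ 3]/8; clear; lia.
  have sub' : E e (k - j.+2) u1 \subset Qs e k v1 u2 :\ v.
    apply/subsetP => y yE; rewrite in_setD1 (subsetP sub _ yE) andbT.
    by apply: (vn _ _ yE); clear -jk hk; lia.
  have := subset_leq_card sub'; have := cardsD1 v (Qs e k v1 u2); rewrite vQ cQ.
  rewrite cE ?leq_subr //.
  have := pw 2 _ s2; rewrite -[2 ^ 2]/4; clear; lia.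

have pQ : forall p, e u1 p -> p \in Qs e k v1 u2.
  move=> p hp; have : p \in outN e u1 by rewrite outNE.
  by rewrite Ha => /set2P[->|->].
have k3 : 3 <= k.-1 by clear -hk; lia.
have badS2 : forall z, z \in E e 2 u1 -> z \notin Qs e k v1 u2 -> z \in ~: R e k u2.
  move=> z /(E_add e 1 1) [p pE pz] zQ; rewrite E1 in pE; rewrite E1 in pz.
  apply: (Bd u u1 u2 v v1 p z eu1 eu2 n12 ev1 ev2 m12 (pQ p pE)) => //.
  - by apply: (Rin 1); rewrite ?E1 //; clear -hk; lia.
  - by apply: (Rin 2); [clear -hk; lia | apply/(E_add e 1 1); exists p; rewrite E1].
  - apply/eqP => zv; subst z; apply: (NV 2) => //.
    by apply/(E_add e 1 1); exists p; rewrite E1.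
have aE : a \in E e 1 u1 by rewrite E1.
have bE : b \in E e 1 u1 by rewrite E1.
have va : a != v by apply: (vn 1); rewrite //; clear -hk; lia.
have vb : b != v by apply: (vn 1); rewrite //; clear -hk; lia.
have five : forall z0 z i, z0 \in E e 2 u1 -> z \in E e i u1 -> 2 <= i <= 3 -> z0 != z ->
    z != v -> z0 \in Qs e k v1 u2 -> z \in Qs e k v1 u2 -> False.
  move=> z0 z i z0E zE /andP[i2 i3] zz h2 z0Q zQ.
  have : 5 <= 4.
    rewrite -{2}cQ; apply: (uniq_card (s := [:: z0; z; v; a; b])); last first.
      by apply/allP; rewrite /= z0Q zQ vQ aQ bQ.
    have h1 : z0 != v by apply: (vn 2); rewrite //; clear -hk; lia.
    have h3 : z0 != a by apply: (dd 2 1); rewrite //; clear -hk; lia.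
    have h4 : z0 != b by apply: (dd 2 1); rewrite //; clear -hk; lia.
    have h5 : z != a by apply: (dd i 1); rewrite //; clear -hk i2 i3; lia.
    have h6 : z != b by apply: (dd i 1); rewrite //; clear -hk i2 i3; lia.
    rewrite /= !inE !negb_or zz h1 h2 h3 h4 h5 h6 !(eq_sym v) va vb ab.
    done.
  by [].
case: (boolP [exists z, (z \in E e 2 u1) && (z \in Qs e k v1 u2)]); last first.
  move/existsPn => hn.
  have sub : E e 2 u1 \subset ~: R e k u2.
    apply/subsetP => z zE; apply: badS2 => //.
    by move: (hn z); rewrite zE.
  have := subset_leq_card sub; rewrite cO cE //; clear -hk; lia.
move=> /existsP [z0 /andP [z0E z0Q]].
have others : E e 2 u1 :\ z0 \subset ~: R e k u2.
  apply/subsetP => z; rewrite in_setD1 => /andP[zz zE]; apply: badS2 => //.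
  apply/negP => zQ; apply: (five z0 z 2) => //; first by rewrite eq_sym.
  by apply: (vn 2); rewrite //; clear -hk; lia.
have cOth : #|E e 2 u1 :\ z0| = 3.
  have := cardsD1 z0 (E e 2 u1); rewrite z0E cE //; clear -hk; lia.
have child : forall z, e z0 z -> z = v \/ z = v1.
  move=> z ez.
  have z3 : z \in E e 3 u1 by apply/(E_add e 2 1); exists z0; rewrite ?E1.
  have zR : z \in R e k.-1 u1 by apply: (Rin 3).
  have zz : z0 != z by apply: (dd 2 3); rewrite //; clear -hk; lia.
  case: (boolP (z \in Qs e k v1 u2)) => zQ.
    have [->|zv] := eqVneq z v; first by left.
    by case: (five z0 z 3 z0E z3 isT zz zv z0Q zQ).
  have [->|zv1] := eqVneq z v1; first by right.
  exfalso.
  have z0R : z0 \in R e k.-1 u1 by apply: (Rin 2) => //; clear -hk; lia.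
  have zO := Bd u u1 u2 v v1 z0 z eu1 eu2 n12 ev1 ev2 m12 z0Q z0R ez zR zQ zv1.
  have sub : z |: (E e 2 u1 :\ z0) \subset ~: R e k u2.
    by apply/subsetP => y; rewrite in_setU1 => /orP[/eqP->//|]; apply: (subsetP others).
  have zn : z \notin E e 2 u1 :\ z0.
    rewrite in_setD1 negb_and; apply/orP; right; apply/negP => zE.
    have := GE _ _ _ _ z3 zE; clear -hk; lia.
  have := subset_leq_card sub; rewrite cardsU1 zn cOth cO; by [].
have [c1 [c2 [c12 Hz]]] := outN2 reg z0.
have ec1 : e z0 c1 by rewrite -outNE Hz !inE eqxx.
have ec2 : e z0 c2 by rewrite -outNE Hz !inE eqxx orbT.
have [ezv ezv1] : e z0 v /\ e z0 v1.
  case: (child c1 ec1) => h1; case: (child c2 ec2) => h2; subst c1 c2;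
    try (by rewrite eqxx in c12); by split.
have h1 : v1 \in E e 1 z0 by rewrite E1.
have h2 : v1 \in E e 2 z0 by apply/(E_add e 1 1); exists v; rewrite E1.
have := GE _ _ _ _ h1 h2; clear -hk; lia.
Qed.
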